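(* Let $\{\mathcal S,\mathcal C,\mathcal R,\mathcal K(t)\}$ with $\mathcal S=\{S_1,\dots,S_N\}$ be a weakly reversible non-autonomous mass-action system with bounded kinetics, and let $D\subset\mathbb R^N_{>0}$. Then at least one of the following holds. (C1) There exists $M>0$ such that for every $x\in D$ having $x_i>M$ or $x_i<1/M$ for at least one $i\in\{1,\dots,N\}$, $$\sum_k\kappa_k(t)\,x^{y_k}(y_k'-y_k)\cdot\ln(x)<0\quad\text{for all }t\ge0.$$ (C2) There exists a sequence $\{x_n\}\subset D$ with $\lim_{n\to\infty}x_{n,i}\in\{0,\infty\}$ for at least one $i$, such that $\mathcal C$ is partitioned along $\{x_n\}$ with tiers $T_1,\dots,T_P$ and some constant $C$, and $T_1$ is a union of linkage classes.
   Context: A chemical reaction network on species $S_1,\dots,S_N$ consists of a finite set $\mathcal C\subset\mathbb Z^N_{\ge0}$ of complexes and a finite set $\mathcal R$ of reactions $y\to y'$ with $y,y'\in\mathcal C$, $y\ne y'$, such that every species has positive coefficient in some complex and every complex appears in some reaction. Reactions are enumerated $y_k\to y_k'$, $k=1,\dots,|\mathcal R|$. The reaction diagram is the directed graph with vertex set $\mathcal C$ and an edge $y\to y'$ for each reaction; its connected components are the linkage classes. $T\subset\mathcal C$ is a union of linkage classes if it is the union of the complex sets of some nonempty collection of linkage classes. The network is weakly reversible if each linkage class is strongly connected. A non-autonomous mass-action system with bounded kinetics is such a network together with functions $\kappa_k:[0,\infty)\to\mathbb R$ and a constant $\eta>0$ with $\eta<\kappa_k(t)<1/\eta$ for all $t\ge0$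 and all $k$, with dynamics $\dot x(t)=\sum_k\kappa_k(t)x(t)^{y_k}(y_k'-y_k)$. For $u\in\mathbb R^N_{\ge0}$, $v\in\mathbb R^N$, $u^v=\prod_iu_i^{v_i}$ ($0^0=1$); $\ln(x)=(\ln x_1,\dots,\ln x_N)$. $\mathcal C$ is partitioned along $\{x_n\}$ if there exist a partition $\{T_i\}_{i=1}^P$ of $\mathcal C$ into nonempty disjoint tiers and $C>1$ such that (i) $y_j,y_k\in T_i$ implies $\frac1Cx_n^{y_j}\le x_n^{y_k}\le Cx_n^{y_j}$ for all $n$, and (ii) $y_j\in T_i$, $y_k\in T_{i+m}$, $m\ge1$ implies $x_n^{y_j}/x_n^{y_k}\to\infty$. *)

(* Defs.v *)
From Stdlib Require Import Reals List Relations.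
Import ListNotations.
Open Scope R_scope.

(* A complex on species S_1..S_N is a list of N natural coefficients
   (species i is index i-1). A reaction is a pair (y, y'). *)
Definition complex := list nat.
Definition reaction := (complex * complex)%type.

Fixpoint rsum (n : nat) (f : nat -> R) : R :=
  match n with O => 0 | S m => rsum m f + f m end.
Fixpoint rprod (n : nat) (f : nat -> R) : R :=
  match n with O => 1 | S m => rprod m f * f m end.

Definition coef (y : complex) (i : nat) : nat := nth i y O.

(* x^y = prod_i x_i^{y_i}  (pow with nat exponent, so 0^0 = 1) *)
Definition monom (N : nat) (x : nat -> R) (y : complex) : R :=
  rprod N (fun i => x i ^ coef y i).

Definition is_complex (Rs : list reaction) (y : complex) : Prop :=
  exists z, In (y, z) Rs \/ In (z, y) Rs.

Definition reaction_network (N : nat) (Rs : list reaction) : Prop :=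
  NoDup Rs /\
  (forall y, is_complex Rs y -> length y = N) /\
  (forall y y', In (y, y') Rs -> y <> y') /\
  (forall i, (i < N)%nat -> exists y, is_complex Rs y /\ (0 < coef y i)%nat).

Definition rxn_edge (Rs : list reaction) (y z : complex) : Prop := In (y, z) Rs.

Definition linked (Rs : list reaction) : relation complex :=
  clos_refl_sym_trans complex (rxn_edge Rs).

Definition reaches (Rs : list reaction) : relation complex :=
  clos_refl_trans complex (rxn_edge Rs).

Definition weakly_reversible (Rs : list reaction) : Prop :=
  forall y z, is_complex Rs y -> is_complex Rs z -> linked Rs y z -> reaches Rs y z.

Definition union_of_linkage_classes (Rs : list reaction) (T : complex -> Prop) : Prop :=
  (exists y, T y) /\ (forall y, T y -> is_complex Rs y) /\
  (forall y z, T y -> linked Rs y z -> T z).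

(* bounded kinetics; kappa k is the rate function of reaction k (0-based) *)
Definition bounded_kinetics (Rs : list reaction) (kappa : nat -> R -> R) (eta : R) : Prop :=
  0 < eta /\
  forall k t, (k < length Rs)%nat -> 0 <= t -> eta < kappa k t < 1 / eta.

Definition field_dot_ln (N : nat) (Rs : list reaction) (kappa : nat -> R -> R)
    (x : nat -> R) (t : R) : R :=
  rsum (length Rs) (fun k =>
    let y := fst (nth k Rs ([], [])) in
    let y' := snd (nth k Rs ([], [])) in
    kappa k t * monom N x y *
      rsum N (fun i => (INR (coef y' i) - INR (coef y i)) * ln (x i))).

(* C is partitioned along the sequence xs with tiers T 0, ..., T (P-1)
   (paper's T_1..T_P) and constant Cc *)
Definition partitioned_along (N : nat) (Rs : list reaction) (xs : nat -> nat -> R)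
    (P : nat) (T : nat -> complex -> Prop) (Cc : R) : Prop :=
  1 < Cc /\
  (forall i, (i < P)%nat -> exists y, T i y) /\
  (forall i y, (i < P)%nat -> T i y -> is_complex Rs y) /\
  (forall y, is_complex Rs y -> exists i, (i < P)%nat /\ T i y) /\
  (forall i j y, (i < P)%nat -> (j < P)%nat -> T i y -> T j y -> i = j) /\
  (forall i yj yk n, (i < P)%nat -> T i yj -> T i yk ->
      / Cc * monom N (xs n) yj <= monom N (xs n) yk /\
      monom N (xs n) yk <= Cc * monom N (xs n) yj) /\
  (forall i i' yj yk, (i < i')%nat -> (i' < P)%nat -> T i yj -> T i' yk ->
      cv_infty (fun n => monom N (xs n) yj / monom N (xs n) yk)).

(* Main.v *)
Require Import Defs.
From Stdlib Require Import Reals List Relations ClassicalEpsilon Lia Lra Arith.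
Import ListNotations.
Open Scope nat_scope.

Lemma find_k : forall (l : list nat) (g : nat -> nat) (P a : nat),
  (forall v, In v l -> g v < P) ->
  (forall v w, In v l -> In w l -> v < w -> g v < g w) ->
  forall l', incl l' l ->
  exists k, k <= P /\ (forall b, In b l' -> b < a -> g b < k) /\
    (forall b, In b l -> a < b -> k <= g b) /\
    (k = 0 \/ exists b0, In b0 l /\ b0 < a /\ k = S (g b0)).
Proof.
  intros l g P a HP Hmono l'. induction l' as [|c l' IH]; intros Hi.
  - exists 0. repeat split; try lia. intros b [].
  - destruct IH as [k [H1 [H2 [H3 H4]]]]. intros x Hx; apply Hi; right; auto.
    assert (Hc : In c l) by (apply Hi; left; auto).
    destruct (lt_dec c a) as [Hca|Hca].
    + destruct (le_lt_dec k (S (g c))) as [Hk|Hk].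
      * exists (S (g c)). pose proof (HP c Hc). split. lia. split.
        intros b [E|E] Hb. subst; lia. pose proof (H2 b E Hb); lia.
        split. intros b Hb Hab. pose proof (Hmono c b Hc Hb ltac:(lia)). lia.
        right. exists c. auto.
      * exists k. split. lia. split. intros b [E|E] Hb. subst; lia. auto. auto.
    + exists k. split. lia. split. intros b [E|E] Hb. subst; lia. auto. auto.
Qed.

Lemma compress : forall l : list nat, exists P (g : nat -> nat),
  (forall v, In v l -> g v < P) /\
  (forall i, i < P -> exists v, In v l /\ g v = i) /\
  (forall v w, In v l -> In w l -> (v < w <-> g v < g w)).
Proof.
  induction l as [|a l IH].
  - exists 0, (fun v => v). repeat split; try (intros; simpl in *; tauto); intros; lia.
  - destruct IH as [P [g [HP [Hs Hm]]]].
    destruct (in_dec Nat.eq_dec a l) as [Ha|Ha].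
    + exists P, g. split. intros v [E|E]; subst; auto. split.
      intros i Hi. destruct (Hs i Hi) as [v [Hv E]]. exists v; split; auto; right; auto.
      intros v w [E|E] [E'|E']; subst; auto.
    + destruct (find_k l g P a HP (fun v w Hv Hw H => proj1 (Hm v w Hv Hw) H) l (incl_refl l))
        as [k [H1 [H2 [H3 H4]]]].
      set (g' := fun v => if v <? a then g v else if v =? a then k else S (g v)).
      assert (F : forall v, In v (a :: l) ->
        (v < a /\ g' v = g v /\ g v < k /\ g v < P) \/ (v = a /\ g' v = k) \/
        (a < v /\ g' v = S (g v) /\ k <= g v /\ g v < P)).
      { intros v [E|E]. subst. right; left. split; auto. unfold g'.
        rewrite Nat.ltb_irrefl, Nat.eqb_refl. auto.
        assert (v <> a) by (intro; subst; contradiction).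
        unfold g'. destruct (lt_dec v a).
        left. rewrite (proj2 (Nat.ltb_lt v a) l0). pose proof (HP v E). pose proof (H2 v E l0). auto.
        right; right. rewrite (proj2 (Nat.ltb_ge v a)) by lia.
        rewrite (proj2 (Nat.eqb_neq v a)) by auto. pose proof (H3 v E). pose proof (HP v E).
        split. lia. split; auto. split; auto; apply H0; lia. }
      exists (S P), g'. split.
      { intros v Hv. destruct (F v Hv) as [?|[?|?]]; lia. }
      split.
      { intros i Hi. destruct (lt_eq_lt_dec i k) as [[Hik|Hik]|Hik].
        - destruct H4 as [H4|[b0 [Hb0 [Hb0a Hk]]]]. lia.
          destruct (Hs i ltac:(pose proof (HP b0 Hb0); lia)) as [c [Hc Ec]].
          exists c. split. right; auto.
          assert (c < a).
          { destruct (lt_dec c b0). lia. destruct (Nat.eq_dec c b0). lia.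
            pose proof (proj1 (Hm b0 c Hb0 Hc) ltac:(lia)). lia. }
          assert (c <> a) by (intro; subst; contradiction).
          destruct (F c (or_intror Hc)) as [?|[?|?]]; lia.
        - exists a. split. left; auto. destruct (F a (or_introl eq_refl)) as [?|[?|?]]; lia.
        - destruct (Hs (i - 1) ltac:(lia)) as [c [Hc Ec]]. exists c. split. right; auto.
          assert (c <> a) by (intro; subst; contradiction).
          destruct (F c (or_intror Hc)) as [?|[?|?]]; lia. }
      intros v w Hv Hw.
      destruct Hv as [Ev|Ev]; destruct Hw as [Ew|Ew].
      * subst. lia.
      * destruct (F v (or_introl Ev)) as [?|[?|?]]; destruct (F w (or_intror Ew)) as [?|[?|?]]; lia.
      * destruct (F v (or_intror Ev)) as [?|[?|?]]; destruct (F w (or_introl Ew)) as [?|[?|?]]; lia.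
      * pose proof (Hm v w Ev Ew) as [X Y].
        destruct (F v (or_intror Ev)) as [?|[?|?]]; destruct (F w (or_intror Ew)) as [?|[?|?]];
        split; intro; try lia.
        all: try (apply X in H0; lia). all: try (apply Y; lia).
Qed.
Open Scope R_scope.

Lemma exp_le_mono : forall a b, a <= b -> exp a <= exp b.
Proof. intros a b [H|H]. left; apply exp_increasing; auto. subst; lra. Qed.

Definition inc (p : nat -> nat) := forall n, (p n < p (S n))%nat.

Lemma inc_mono : forall p, inc p -> forall n m, (n <= m)%nat -> (p n <= p m)%nat.
Proof. intros p Hp n m H. induction H. lia. specialize (Hp m). lia. Qed.

Lemma inc_ge : forall p, inc p -> forall n, (n <= p n)%nat.
Proof. intros p Hp n. induction n. lia. specialize (Hp n). lia. Qed.

Lemma inc_comp : forall p q, inc p -> inc q -> inc (fun n => p (q n)).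
Proof. intros p q Hp Hq n. assert (H := inc_mono p Hp (S (q n)) (q (S n)) (Hq n)).
  specialize (Hp (q n)). lia. Qed.

Lemma inf_often_sub : forall Q : nat -> Prop,
  (forall m, exists n, (m <= n)%nat /\ Q n) -> exists p, inc p /\ forall n, Q (p n).
Proof.
  intros Q H.
  set (h := fun m => proj1_sig (constructive_indefinite_description _ (H m))).
  assert (Hh : forall m, (m <= h m)%nat /\ Q (h m)).
  { intro m. unfold h. destruct (constructive_indefinite_description _ (H m)); auto. }
  exists (fix p n := match n with O => h O | S k => h (S (p k)) end).
  split.
  - intro n. simpl. destruct (Hh (S ((fix p (n0 : nat) : nat :=
       match n0 with O => h 0%nat | S k => h (S (p k)) end) n))). lia.
  - intro n. destruct n; simpl; apply Hh.
Qed.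

Definition bnd (s : nat -> R) := exists B, forall n, Rabs (s n) <= B.
Definition pinf (s : nat -> R) := forall B, exists N0, forall n, (N0 <= n)%nat -> B < s n.
Definition minf (s : nat -> R) := forall B, exists N0, forall n, (N0 <= n)%nat -> s n < B.
Definition tri s := bnd s \/ pinf s \/ minf s.

Lemma tri_sub : forall s p, tri s -> inc p -> tri (fun n => s (p n)).
Proof.
  intros s p [[B H]|[H|H]] Hp.
  - left. exists B. intro; apply H.
  - right; left. intro B. destruct (H B) as [N0 HN]. exists N0. intros n Hn.
    apply HN. pose proof (inc_ge p Hp n). lia.
  - right; right. intro B. destruct (H B) as [N0 HN]. exists N0. intros n Hn.
    apply HN. pose proof (inc_ge p Hp n). lia.
Qed.

Lemma tri_exists : forall s, exists p, inc p /\ tri (fun n => s (p n)).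
Proof.
  intro s.
  destruct (classic (exists B, forall m, exists n, (m <= n)%nat /\ Rabs (s n) <= B)) as [[B HB]|HB].
  - destruct (inf_often_sub _ HB) as [p [Hp Hq]]. exists p. split; auto. left. exists B; auto.
  - assert (Hf : forall B, exists m, forall n, (m <= n)%nat -> B < Rabs (s n)).
    { intro B. apply NNPP. intro Hc. apply HB. exists B. intro m.
      apply NNPP. intro Hc2. apply Hc. exists m. intros n Hn.
      apply Rnot_le_lt. intro. apply Hc2. exists n; auto. }
    destruct (classic (forall m, exists n, (m <= n)%nat /\ 0 < s n)) as [Hp|Hp].
    + destruct (inf_often_sub _ Hp) as [p [Hp1 Hp2]]. exists p. split; auto.
      right; left. intro B. destruct (Hf B) as [m Hm]. exists m. intros n Hn.
      specialize (Hp2 n). assert (Hm' := Hm (p n) ltac:(pose proof (inc_ge p Hp1 n); lia)).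
      rewrite Rabs_right in Hm' by lra. lra.
    + assert (Hm : exists m, forall n, (m <= n)%nat -> s n <= 0).
      { apply NNPP. intro Hc. apply Hp. intro m. apply NNPP. intro Hc2. apply Hc. exists m.
        intros n Hn. apply Rnot_lt_le. intro. apply Hc2. exists n. auto. }
      destruct Hm as [m Hm]. exists (fun n => n). split. intro; lia.
      right; right. intro B. destruct (Hf (Rabs B)) as [m2 Hm2]. exists (max m m2).
      intros n Hn. specialize (Hm n ltac:(lia)). specialize (Hm2 n ltac:(lia)).
      rewrite (Rabs_left1 (s n)) in Hm2 by lra. pose proof (Rle_abs (-B)) as HH. rewrite Rabs_Ropp in HH. idtac. lra.
Qed.

Lemma tri_list : forall ss : list (nat -> R), exists p, inc p /\
  forall s, In s ss -> tri (fun n => s (p n)).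
Proof.
  induction ss as [|s ss IH].
  - exists (fun n => n). split. intro; lia. intros s [].
  - destruct IH as [p [Hp H]]. destruct (tri_exists (fun n => s (p n))) as [q [Hq Hs]].
    exists (fun n => p (q n)). split. apply inc_comp; auto.
    intros s' [E|E]. subst; auto. apply (tri_sub (fun n => s' (p n))); auto.
Qed.

Lemma rsum_ext : forall n f g, (forall i, (i < n)%nat -> f i = g i) -> rsum n f = rsum n g.
Proof. induction n; intros; simpl; auto. rewrite (IHn f g), (H n); auto. Qed.
Lemma rsum_le : forall n f g, (forall i, (i < n)%nat -> f i <= g i) -> rsum n f <= rsum n g.
Proof. induction n; intros; simpl. lra. pose proof (IHn f g ltac:(auto)). pose proof (H n ltac:(lia)). lra. Qed.
Lemma rsum_plus : forall n f g, rsum n (fun i => f i + g i) = rsum n f + rsum n g.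
Proof. induction n; intros; simpl. lra. rewrite IHn. lra. Qed.
Lemma rsum_minus : forall n f g, rsum n (fun i => f i - g i) = rsum n f - rsum n g.
Proof. induction n; intros; simpl. lra. rewrite IHn. lra. Qed.
Lemma rsum_const : forall n c, rsum n (fun _ => c) = INR n * c.
Proof. induction n; intros. simpl; lra. rewrite S_INR. simpl. rewrite IHn. lra. Qed.
Lemma rsum_ind : forall n k0 v, (k0 < n)%nat ->
  rsum n (fun k => if Nat.eq_dec k k0 then v else 0) = v.
Proof.
  induction n; intros. lia. simpl. destruct (Nat.eq_dec n k0).
  - subst. rewrite (rsum_ext _ _ (fun _ => 0)). rewrite rsum_const. lra.
    intros i Hi. destruct (Nat.eq_dec i k0); auto. lia.
  - rewrite IHn by lia. lra.
Qed.

Definition L (N : nat) (x : nat -> R) (y : complex) : R :=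
  rsum N (fun i => INR (coef y i) * ln (x i)).
Definition dd N (x : nat -> R) a b := L N x a - L N x b.

Lemma monom_exp : forall N x y, (forall i, (i < N)%nat -> 0 < x i) ->
  monom N x y = exp (L N x y).
Proof.
  intros N x y. unfold monom, L. induction N; intros H; simpl. rewrite exp_0; auto.
  rewrite exp_plus, IHN by auto. f_equal. rewrite <- Rpower_pow by (apply H; lia).
  unfold Rpower. auto.
Qed.

Lemma inner_L : forall N x y y',
  rsum N (fun i => (INR (coef y' i) - INR (coef y i)) * ln (x i)) = L N x y' - L N x y.
Proof. intros. unfold L. rewrite <- rsum_minus. apply rsum_ext. intros; ring. Qed.

Lemma pinf_exp_cv : forall s, pinf s -> cv_infty (fun n => exp (s n)).
Proof.
  intros s H M. destruct (H (ln (Rabs M + 1))) as [N0 HN]. exists N0. intros n Hn.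
  specialize (HN n Hn). apply exp_increasing in HN. rewrite exp_ln in HN.
  pose proof (Rle_abs M). lra. pose proof (Rabs_pos M). lra.
Qed.

Lemma minf_exp_cv : forall s, minf s -> Un_cv (fun n => exp (s n)) 0.
Proof.
  intros s H eps He. destruct (H (ln eps)) as [N0 HN]. exists N0. intros n Hn.
  specialize (HN n Hn). apply exp_increasing in HN. rewrite exp_ln in HN by lra.
  unfold Rdist. rewrite Rminus_0_r, Rabs_right. lra. left; apply exp_pos.
Qed.

Lemma unif_bnd : forall (A : Type) (f : A -> nat -> R) (l : list A),
  exists B, 0 <= B /\ forall p, In p l -> bnd (f p) -> forall n, Rabs (f p n) <= B.
Proof.
  intros A f l. induction l as [|p l IH].
  - exists 0. split. lra. intros p [].
  - destruct IH as [B [HB0 HB]]. destruct (classic (bnd (f p))) as [[B' HB']|Hn].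
    + exists (Rmax B B'). split. pose proof (Rmax_l B B'); lra.
      intros q [E|E] Hq n. subst. pose proof (Rmax_r B B'). pose proof (HB' n). lra.
      pose proof (Rmax_l B B'). pose proof (HB q E Hq n). lra.
    + exists B. split; auto. intros q [E|E] Hq n. subst; contradiction. auto.
Qed.

Lemma event_list : forall (A : Type) (Q : A -> nat -> Prop) (l : list A),
  (forall p, In p l -> exists N0, forall n, (N0 <= n)%nat -> Q p n) ->
  exists N0, forall n, (N0 <= n)%nat -> forall p, In p l -> Q p n.
Proof.
  intros A Q l. induction l as [|p l IH]; intros H.
  - exists O. intros n _ p [].
  - destruct IH as [N1 H1]. intros; apply H; right; auto.
    destruct (H p (or_introl eq_refl)) as [N2 H2]. exists (max N1 N2).
    intros n Hn q [E|E]. subst. apply H2; lia. apply H1; auto. lia.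
Qed.

Lemma Rabs_def2b : forall x B, Rabs x <= B -> -B <= x <= B.
Proof. intros x B. unfold Rabs. destruct (Rcase_abs x); lra. Qed.

Lemma pinf_sum_bnd : forall s t u, pinf s -> bnd t -> (forall n, u n = s n + t n) -> pinf u.
Proof.
  intros s t u Hs [B Ht] Hu C. destruct (Hs (C + B)) as [N0 HN]. exists N0. intros n Hn.
  rewrite Hu. specialize (HN n Hn). specialize (Ht n). pose proof (Rabs_def2b _ _ Ht). lra.
Qed.
Lemma pinf_sum : forall s t u, pinf s -> pinf t -> (forall n, u n = s n + t n) -> pinf u.
Proof.
  intros s t u Hs Ht Hu C. destruct (Hs C) as [N0 HN]. destruct (Ht 0) as [N1 HN1].
  exists (max N0 N1). intros n Hn. rewrite Hu. specialize (HN n ltac:(lia)). specialize (HN1 n ltac:(lia)). lra.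
Qed.
Lemma bnd_opp : forall s t, bnd s -> (forall n, t n = - s n) -> bnd t.
Proof. intros s t [B H] Ht. exists B. intro n. rewrite Ht, Rabs_Ropp. auto. Qed.
Lemma minf_opp : forall s t, minf s -> (forall n, t n = - s n) -> pinf t.
Proof. intros s t H Ht C. destruct (H (-C)) as [N0 HN]. exists N0. intros n Hn. rewrite Ht. specialize (HN n Hn). lra. Qed.
Lemma pinf_opp : forall s t, pinf s -> (forall n, t n = - s n) -> minf t.
Proof. intros s t H Ht C. destruct (H (-C)) as [N0 HN]. exists N0. intros n Hn. rewrite Ht. specialize (HN n Hn). lra. Qed.
Lemma bnd_not_pinf : forall s, bnd s -> ~ pinf s.
Proof. intros s [B H] Hp. destruct (Hp B) as [N0 HN]. specialize (HN N0 (le_n _)). specialize (H N0).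
  pose proof (Rle_abs (s N0)). lra. Qed.
Lemma bnd_not_minf : forall s, bnd s -> ~ minf s.
Proof. intros s [B H] Hp. destruct (Hp (-B)) as [N0 HN]. specialize (HN N0 (le_n _)). specialize (H N0).
  pose proof (Rabs_def2b _ _ H). lra. Qed.
Lemma pinf_not_minf : forall s, pinf s -> ~ minf s.
Proof. intros s H1 H2. destruct (H1 0) as [N0 HN]. destruct (H2 0) as [N1 HN1].
  specialize (HN (max N0 N1) ltac:(lia)). specialize (HN1 (max N0 N1) ltac:(lia)). lra. Qed.

Lemma my_cv_infty_ext : forall s t, cv_infty s -> (forall n, s n = t n) -> cv_infty t.
Proof. intros s t H E M. destruct (H M) as [N0 HN]. exists N0. intros; rewrite <- E; auto. Qed.
Lemma my_Un_cv_ext : forall s t l, Un_cv s l -> (forall n, s n = t n) -> Un_cv t l.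
Proof. intros s t l H E e He. destruct (H e He) as [N0 HN]. exists N0. intros; rewrite <- E; auto. Qed.

Lemma filter_len_le : forall (A : Type) (f g : A -> bool) l,
  (forall z, In z l -> f z = true -> g z = true) -> (length (filter f l) <= length (filter g l))%nat.
Proof.
  intros A f g l. induction l as [|z l IH]; intros H; simpl. lia.
  assert (IH' := IH (fun w Hw => H w (or_intror Hw))).
  destruct (f z) eqn:E. rewrite (H z (or_introl eq_refl) E). simpl. lia.
  destruct (g z); simpl; lia.
Qed.
Lemma filter_len_lt : forall (A : Type) (f g : A -> bool) l,
  (forall z, In z l -> f z = true -> g z = true) ->
  (exists z, In z l /\ f z = false /\ g z = true) ->
  (length (filter f l) < length (filter g l))%nat.
Proof.
  intros A f g l. induction l as [|z l IH]; intros H [w [Hw [E1 E2]]]. destruct Hw.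
  simpl. destruct Hw as [Hw|Hw].
  - subst. rewrite E1, E2. simpl. pose proof (filter_len_le A f g l (fun w Hw => H w (or_intror Hw))). lia.
  - assert (IH' := IH (fun w Hw => H w (or_intror Hw)) ltac:(exists w; auto)).
    destruct (f z) eqn:E. rewrite (H z (or_introl eq_refl) E). simpl. lia.
    destruct (g z); simpl; lia.
Qed.

Lemma exp_pair_bound : forall u v B, Rabs (v - u) <= B -> exp v <= (exp B + 1) * exp u.
Proof.
  intros u v B H. replace v with (u + (v - u)) by ring. rewrite exp_plus.
  pose proof (exp_le_mono (v - u) B (Rle_trans _ _ _ (Rle_abs _) H)).
  pose proof (exp_pos u). pose proof (exp_pos (v-u)). nra.
Qed.

Lemma term_bound : forall eta k Ly Ly', 0 < eta -> eta < k < 1 / eta ->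
  k * exp Ly * (Ly' - Ly) <= / eta * exp Ly'.
Proof.
  intros eta k Ly Ly' He Hk. assert (Hi : 1 / eta = / eta) by (unfold Rdiv; ring).
  rewrite Hi in Hk. pose proof (exp_pos Ly). pose proof (exp_pos Ly').
  assert (0 < / eta) by (apply Rinv_0_lt_compat; auto).
  destruct (Rle_lt_dec (Ly' - Ly) 0) as [Hd|Hd].
  - assert (k * exp Ly * (Ly' - Ly) <= 0). { assert (0 < k * exp Ly) by nra. nra. } nra.
  - assert (E : exp Ly' = exp Ly * exp (Ly' - Ly)) by (rewrite <- exp_plus; f_equal; ring).
    pose proof (exp_ineq1 (Ly' - Ly) ltac:(lra)).
    assert (exp Ly * (Ly' - Ly) <= exp Ly') by nra.
    assert (0 <= exp Ly * (Ly' - Ly)) by nra. nra.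
Qed.

Definition cs (Rs : list reaction) : list complex := map fst Rs ++ map snd Rs.

Lemma is_complex_cs : forall Rs y, is_complex Rs y <-> In y (cs Rs).
Proof.
  intros Rs y. unfold is_complex, cs. rewrite in_app_iff, !in_map_iff. split.
  - intros [z [H|H]]. left; exists (y, z); auto. right; exists (z, y); auto.
  - intros [[[p q] [E H]]|[[p q] [E H]]]; simpl in E; subst. exists q; auto. exists p; auto.
Qed.

Definition dom N (xs : nat -> nat -> R) a b := pinf (fun n => dd N (xs n) a b).
Definition domb N xs a b : bool := if excluded_middle_informative (dom N xs a b) then true else false.
Definition rank N xs (l : list complex) y := length (filter (fun z => domb N xs z y) l).

Lemma domb_true : forall N xs a b, domb N xs a b = true <-> dom N xs a b.
Proof. intros. unfold domb. destruct excluded_middle_informative; split; auto; discriminate. Qed.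
Lemma domb_false : forall N xs a b, domb N xs a b = false <-> ~ dom N xs a b.
Proof. intros. unfold domb. destruct excluded_middle_informative; split; auto; try discriminate; tauto. Qed.

Lemma dom_irr : forall N xs a, ~ dom N xs a a.
Proof. intros N xs a H. destruct (H 0) as [N0 HN]. specialize (HN N0 (le_n _)). unfold dd in HN. lra. Qed.

Lemma dom_trans : forall N xs a b c, dom N xs a b -> dom N xs b c -> dom N xs a c.
Proof. intros N xs a b c H1 H2. apply (pinf_sum _ _ _ H1 H2). intros; cbv beta; unfold dd; ring. Qed.

Lemma dom_bnd_r : forall N xs a b c, dom N xs a b -> bnd (fun n => dd N (xs n) b c) -> dom N xs a c.
Proof. intros N xs a b c H1 H2. apply (pinf_sum_bnd _ _ _ H1 H2). intros; cbv beta; unfold dd; ring. Qed.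

Section Rank.
Variables (N : nat) (xs : nat -> nat -> R) (l : list complex).
Hypothesis Htri : forall a b, In a l -> In b l -> tri (fun n => dd N (xs n) a b).

Lemma RK1 : forall a b, In a l -> dom N xs a b -> (rank N xs l a < rank N xs l b)%nat.
Proof.
  intros a b Ha H. apply filter_len_lt.
  - intros z _ Hz. apply domb_true in Hz. apply domb_true. eapply dom_trans; eauto.
  - exists a. split; auto. split. apply domb_false, dom_irr. apply domb_true; auto.
Qed.

Lemma RK2 : forall a b, bnd (fun n => dd N (xs n) a b) -> rank N xs l a = rank N xs l b.
Proof.
  intros a b H. unfold rank. f_equal. apply filter_ext_in. intros z _.
  destruct (domb N xs z a) eqn:E1; destruct (domb N xs z b) eqn:E2; auto.
  - apply domb_true in E1. apply domb_false in E2. exfalso. apply E2. eapply dom_bnd_r; eauto.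
  - apply domb_false in E1. apply domb_true in E2. exfalso. apply E1. eapply dom_bnd_r; eauto.
    eapply bnd_opp; eauto. intros; cbv beta; unfold dd; ring.
Qed.

Lemma RK3 : forall a b, In a l -> In b l -> (rank N xs l a < rank N xs l b)%nat -> dom N xs a b.
Proof.
  intros a b Ha Hb H. destruct (Htri a b Ha Hb) as [H1|[H1|H1]]; auto.
  - rewrite (RK2 a b H1) in H. lia.
  - assert (dom N xs b a). { eapply minf_opp; eauto. intros; cbv beta; unfold dd; ring. }
    pose proof (RK1 b a Hb H0). lia.
Qed.

Lemma RK4 : forall a b, In a l -> In b l -> rank N xs l a = rank N xs l b -> bnd (fun n => dd N (xs n) a b).
Proof.
  intros a b Ha Hb H. destruct (Htri a b Ha Hb) as [H1|[H1|H1]]; auto.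
  - pose proof (RK1 a b Ha H1). lia.
  - assert (dom N xs b a). { eapply minf_opp; eauto. intros; cbv beta; unfold dd; ring. }
    pose proof (RK1 b a Hb H0). lia.
Qed.
End Rank.

Lemma key (N : nat) (Rs : list reaction) (kappa : nat -> R -> R) (eta : R)
  (xs : nat -> nat -> R) (ts : nat -> R) :
  weakly_reversible Rs -> bounded_kinetics Rs kappa eta ->
  (forall n i, (i < N)%nat -> 0 < xs n i) ->
  (forall n, 0 <= ts n) -> (forall n, 0 <= field_dot_ln N Rs kappa (xs n) (ts n)) ->
  (forall a b, In a (cs Rs) -> In b (cs Rs) -> tri (fun n => dd N (xs n) a b)) ->
  cs Rs <> [] ->
  exists P T Cc, partitioned_along N Rs xs P T Cc /\ union_of_linkage_classes Rs (T O).
Proof.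
  intros HWR [Heta Hk] Hpos Hts Hdot Htri Hne.
  set (l := cs Rs).
  set (rk := rank N xs l).
  destruct (compress (map rk l)) as [P [g [Hg1 [Hg2 Hg3]]]].
  assert (Hord : forall a b, In a l -> In b l -> ((rk a < rk b)%nat <-> (g (rk a) < g (rk b))%nat)).
  { intros a b Ha Hb. apply Hg3; apply in_map; auto. }
  assert (Heq : forall a b, In a l -> In b l -> g (rk a) = g (rk b) -> rk a = rk b).
  { intros a b Ha Hb E. pose proof (Hord a b Ha Hb). pose proof (Hord b a Hb Ha). lia. }
  destruct (unif_bnd _ (fun p n => dd N (xs n) (fst p) (snd p)) (list_prod l l)) as [B [HB0 HB]].
  assert (HBp : forall a b, In a l -> In b l -> rk a = rk b -> forall n, Rabs (dd N (xs n) a b) <= B).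
  { intros a b Ha Hb E n. apply (HB (a, b)). apply in_prod; auto. apply (RK4 N xs l Htri); auto. }
  assert (Hmon : forall n y, monom N (xs n) y = exp (L N (xs n) y)).
  { intros. apply monom_exp. auto. }
  set (T := fun i y => In y l /\ g (rk y) = i).
  assert (Hleave : forall a b, T O a -> In (a, b) Rs -> T O b).
  { intros a b [Ha Ta] Hab.
    assert (Hb : In b l) by (apply is_complex_cs; exists a; auto).
    split; auto. apply NNPP. intro Tb.
    assert (Hdab : dom N xs a b). { apply (RK3 N xs l Htri); auto. apply Hord; auto. lia. }
    assert (Hev : forall y, In y l -> exists N0, forall n, (N0 <= n)%nat -> dd N (xs n) y a <= B).
    { intros y Hy. destruct (Htri y a Hy Ha) as [H1|[H1|H1]].
      - exists O. intros n _. pose proof (HB (y, a) ltac:(apply in_prod; auto) H1 n).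
        pose proof (Rle_abs (dd N (xs n) y a)). simpl in *. lra.
      - exfalso. assert (rk y < rk a)%nat by (apply (RK1 N xs l); auto). apply Hord in H; auto. lia.
      - destruct (H1 0) as [N0 HN]. exists N0. intros n Hn. specialize (HN n Hn). lra. }
    destruct (event_list _ (fun y n => dd N (xs n) y a <= B) l Hev) as [N1 HN1].
    destruct (In_nth Rs (a, b) ([], []) Hab) as [k0 [Hk0 Ek0]].
    set (K := length Rs).
    destruct (Hdab (INR K * exp B / eta / eta)) as [N2 HN2].
    set (n := max N1 N2).
    specialize (HN1 n ltac:(lia)). specialize (HN2 n ltac:(lia)).
    set (M := exp (L N (xs n) a)).
    set (dab := dd N (xs n) a b) in *.
    assert (HM : 0 < M) by apply exp_pos.
    assert (Hc0 : 0 <= INR K * exp B / eta / eta).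
    { pose proof (pos_INR K). pose proof (exp_pos B).
      unfold Rdiv. repeat apply Rmult_le_pos; try lra; left; apply Rinv_0_lt_compat; lra. }
    set (c := / eta * exp B * M).
    assert (Hc : 0 <= c). { unfold c. pose proof (exp_pos B). pose proof (Rinv_0_lt_compat eta Heta). 
      assert (0 < / eta * exp B) by nra. nra. }
    assert (Hle : field_dot_ln N Rs kappa (xs n) (ts n) <=
       rsum K (fun k => c + (if Nat.eq_dec k k0 then - (eta * M * dab) else 0))).
    { unfold field_dot_ln. apply rsum_le. intros k Hk'.
      rewrite Hmon, inner_L.
      set (y := fst (nth k Rs ([], []))). set (y' := snd (nth k Rs ([], []))).
      destruct (Hk k (ts n) Hk' (Hts n)) as [Hk1 Hk2].
      destruct (Nat.eq_dec k k0) as [E|E].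
      - subst k. unfold y, y'. rewrite Ek0. simpl.
        fold M. replace (L N (xs n) b - L N (xs n) a) with (- dab) by (unfold dab, dd; ring).
        assert (0 < dab) by lra. assert (0 <= (kappa k0 (ts n) - eta) * (M * dab)) by (apply Rmult_le_pos; nra). nra.
      - assert (Hy' : In y' l).
        { apply is_complex_cs. exists y. right. unfold y, y'. rewrite <- (surjective_pairing (nth k Rs ([], []))). simpl.
          apply nth_In; auto. }
        pose proof (term_bound eta (kappa k (ts n)) (L N (xs n) y) (L N (xs n) y') Heta ltac:(lra)).
        assert (exp (L N (xs n) y') <= exp B * M).
        { unfold M. replace (L N (xs n) y') with (L N (xs n) a + dd N (xs n) y' a) by (unfold dd; ring).
          rewrite exp_plus. pose proof (exp_le_mono _ _ (HN1 y' Hy')). pose proof (exp_pos (L N (xs n) a)). nra. }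
        assert (/ eta * exp (L N (xs n) y') <= c).
        { unfold c. pose proof (Rinv_0_lt_compat eta Heta). nra. }
        lra. }
    rewrite rsum_plus, rsum_const, rsum_ind in Hle by auto.
    specialize (Hdot n).
    assert (INR K * c < eta * M * dab).
    { unfold c. assert (E1 : INR K * (/ eta * exp B * M) = eta * M * (INR K * exp B / eta / eta)).
      { field. lra. }
      rewrite E1. apply Rmult_lt_compat_l. nra. auto. }
    lra. }
  assert (HreachT : forall y z, reaches Rs y z -> T O y -> T O z).
  { intros y z H. induction H; auto. intro; eapply Hleave; eauto. }
  exists P, T, (exp B + 1). split.
  - unfold partitioned_along. split. pose proof (exp_pos B). lra.
    split. { intros i Hi. destruct (Hg2 i Hi) as [v [Hv E]]. apply in_map_iff in Hv.
      destruct Hv as [y [Ey Hy]]. exists y. split; auto. subst; auto. }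
    split. { intros i y _ [Hy _]. apply is_complex_cs; auto. }
    split. { intros y Hy. apply is_complex_cs in Hy. exists (g (rk y)). split; [|split]; auto.
      apply Hg1, in_map; auto. }
    split. { intros i j y _ _ [_ E1] [_ E2]. congruence. }
    split.
    { intros i yj yk n _ [Hj Ej] [Hk' Ek]. subst i.
      pose proof (Heq yj yk Hj Hk' (eq_sym Ek)) as E.
      pose proof (HBp yj yk Hj Hk' E n) as B1. pose proof (HBp yk yj Hk' Hj (eq_sym E) n) as B2.
      rewrite !Hmon. unfold dd in B1, B2. split.
      + pose proof (exp_pair_bound (L N (xs n) yk) (L N (xs n) yj) B B1).
        assert (0 < exp B + 1) by (pose proof (exp_pos B); lra).
        apply Rmult_le_reg_l with (exp B + 1); auto. rewrite <- Rmult_assoc, Rinv_r by lra. lra.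
      + apply exp_pair_bound; auto. }
    { intros i i' yj yk Hii Hi' [Hj Ej] [Hk' Ek].
      assert (rk yj < rk yk)%nat. { apply Hord; auto. lia. }
      pose proof (RK3 N xs l Htri yj yk Hj Hk' H) as Hd.
      apply my_cv_infty_ext with (fun n => exp (dd N (xs n) yj yk)). apply pinf_exp_cv; auto.
      intro n. rewrite !Hmon. unfold dd. unfold Rminus. rewrite exp_plus, exp_Ropp. auto. }
  - split; [|split].
    + assert (Hy0' : exists y0, In y0 l).
      { unfold l. destruct (cs Rs) as [|c r]. contradiction. exists c; left; auto. }
      destruct Hy0' as [y0 Hy0].
      assert (0 < P)%nat by (pose proof (Hg1 (rk y0) (in_map _ _ _ Hy0)); lia).
      destruct (Hg2 O H) as [v [Hv E]]. apply in_map_iff in Hv. destruct Hv as [y [Ey Hy]].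
      exists y. split; auto. subst; auto.
    + intros y [Hy _]. apply is_complex_cs; auto.
    + intros y z Ty Hl. 
      assert (Hiff : forall u v, linked Rs u v -> (T O u <-> T O v)).
      { intros u v H. unfold linked in H. induction H as [x0 y0 H|x0|x0 y0 H IH|x0 y0 z0 H1 IH1 H2 IH2].
        - split. intro; eapply Hleave; eauto.
          intro Ty'. apply (HreachT y0 x0); auto. apply HWR.
          exists x0; right; exact H. exists y0; left; exact H.
          apply rst_sym, rst_step; auto.
        - tauto.
        - tauto.
        - tauto. }
      apply (Hiff y z Hl); auto.
Qed.

Theorem mainTheorem4 (N : nat) (Rs : list reaction) (kappa : nat -> R -> R) (eta : R)
  (D : (nat -> R) -> Prop) :
  reaction_network N Rs ->
  weakly_reversible Rs ->
  bounded_kinetics Rs kappa eta ->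
  (forall x, D x -> forall i, (i < N)%nat -> 0 < x i) ->
  (exists M, 0 < M /\
     forall x, D x ->
       (exists i, (i < N)%nat /\ (M < x i \/ x i < 1 / M)) ->
       forall t, 0 <= t -> field_dot_ln N Rs kappa x t < 0)
  \/
  (exists xs : nat -> nat -> R,
     (forall n, D (xs n)) /\
     (exists i, (i < N)%nat /\
        (Un_cv (fun n => xs n i) 0 \/ cv_infty (fun n => xs n i))) /\
     exists (P : nat) (T : nat -> complex -> Prop) (Cc : R),
       partitioned_along N Rs xs P T Cc /\
       union_of_linkage_classes Rs (T O)).
Proof.
  intros HRN HWR HBK HD.
  destruct (classic (exists M, 0 < M /\
     forall x, D x ->
       (exists i, (i < N)%nat /\ (M < x i \/ x i < 1 / M)) ->
       forall t, 0 <= t -> field_dot_ln N Rs kappa x t < 0)) as [H|HC1]; [left; exact H|right].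
  assert (Hseq : forall n : nat, exists p : (nat -> R) * R,
    D (fst p) /\ (exists i, (i < N)%nat /\ (INR n + 1 < fst p i \/ fst p i < 1 / (INR n + 1))) /\
    0 <= snd p /\ 0 <= field_dot_ln N Rs kappa (fst p) (snd p)).
  { intro n. apply NNPP. intro Hc. apply HC1. exists (INR n + 1). split.
    pose proof (pos_INR n); lra.
    intros x Dx Hex t Ht. apply Rnot_le_lt. intro Hle. apply Hc. exists (x, t). simpl. auto. }
  set (pp := fun n => proj1_sig (constructive_indefinite_description _ (Hseq n))).
  assert (Hpp : forall n, D (fst (pp n)) /\ (exists i, (i < N)%nat /\
     (INR n + 1 < fst (pp n) i \/ fst (pp n) i < 1 / (INR n + 1))) /\
    0 <= snd (pp n) /\ 0 <= field_dot_ln N Rs kappa (fst (pp n)) (snd (pp n))).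
  { intro n. unfold pp. destruct (constructive_indefinite_description _ (Hseq n)); auto. }
  set (x := fun n => fst (pp n)).
  set (l := cs Rs).
  set (ss := map (fun i n => ln (x n i)) (seq 0 N) ++
             map (fun pr n => dd N (x n) (fst pr) (snd pr)) (list_prod l l)).
  destruct (tri_list ss) as [psi [Hpsi Htr]].
  set (xs := fun n => x (psi n)).
  assert (Hxpos : forall n i, (i < N)%nat -> 0 < xs n i).
  { intros n i Hi. apply (HD _ (proj1 (Hpp (psi n)))); auto. }
  assert (HN0 : (0 < N)%nat).
  { destruct (proj1 (proj2 (Hpp O))) as [i [Hi _]]. lia. }
  assert (Hne : cs Rs <> []).
  { destruct HRN as [_ [_ [_ Hsp]]]. destruct (Hsp O HN0) as [y [Hy _]].
    apply is_complex_cs in Hy. intro E. rewrite E in Hy. destruct Hy. }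
  exists xs. split. { intro n. apply (Hpp (psi n)). }
  split.
  -
    assert (Hcoord : exists i, (i < N)%nat /\ (pinf (fun n => ln (xs n i)) \/ minf (fun n => ln (xs n i)))).
    { apply NNPP. intro Hc.
      assert (Hb : forall i, In i (seq 0 N) -> bnd (fun n => ln (xs n i))).
      { intros i Hi. apply in_seq in Hi.
        assert (Ht : tri (fun n => ln (xs n i))).
        { apply (Htr (fun n => ln (x n i))). apply in_or_app. left.
          apply in_map_iff. exists i. split; auto. apply in_seq; lia. }
        destruct Ht as [?|[?|?]]; auto; exfalso; apply Hc; exists i; split; auto; lia. }
      destruct (unif_bnd _ (fun i n => ln (xs n i)) (seq 0 N)) as [B [HB0 HB]].
      destruct (INR_unbounded (exp B)) as [n Hn].
      destruct (proj1 (proj2 (Hpp (psi n)))) as [i [Hi Hx]].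
      assert (Hin : In i (seq 0 N)) by (apply in_seq; lia).
      pose proof (HB i Hin (Hb i Hin) n) as HBn. simpl in HBn.
      pose proof (Rabs_def2b _ _ HBn) as HR.
      pose proof (le_INR _ _ (inc_ge psi Hpsi n)) as Hge.
      pose proof (Hxpos n i Hi) as Hp. unfold xs in Hp.
      pose proof (exp_pos B).
      destruct Hx as [Hx|Hx].
      + assert (H3 : exp B < x (psi n) i) by (unfold x; lra).
        apply ln_increasing in H3; auto. rewrite ln_exp in H3. unfold xs in HR. lra.
      + assert (H3 : x (psi n) i < / exp B).
        { apply Rlt_le_trans with (1 / (INR (psi n) + 1)). unfold x; auto.
          unfold Rdiv. rewrite Rmult_1_l. apply Rinv_le_contravar; lra. }
        rewrite <- exp_Ropp in H3. apply ln_increasing in H3; auto. rewrite ln_exp in H3.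
        unfold xs in HR. lra. }
    destruct Hcoord as [i [Hi [Hp|Hm]]]; exists i; split; auto.
    + right. refine (my_cv_infty_ext _ (fun n => xs n i) (pinf_exp_cv (fun n => ln (xs n i)) Hp) _).
      intro n. apply exp_ln, Hxpos; auto.
    + left. refine (my_Un_cv_ext _ (fun n => xs n i) 0 (minf_exp_cv (fun n => ln (xs n i)) Hm) _).
      intro n. apply exp_ln, Hxpos; auto.
  - apply (key N Rs kappa eta xs (fun n => snd (pp (psi n)))); auto.
    + intro n. apply (Hpp (psi n)).
    + intro n. apply (Hpp (psi n)).
    + intros a b Ha Hb. apply (Htr (fun n => dd N (x n) a b)). apply in_or_app. right.
      apply in_map_iff. exists (a, b). split; auto. apply in_prod; auto.
Qed.
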